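(* Let $i_0\ge1$ be an integer and $f:[p_{i_0},+\infty)\to\mathbb R$ an increasing function such that $p_{i+1}\le p_i+f(p_{i+1})$ for all $i\ge i_0$. Let $k\ge1$ and $x\ge p_{i_0+k-1}$. If $t\mapsto f(t)/t$ is decreasing for $t\ge x$, then \[ \eta_k(x)\ge 1-k\frac{f(x)}{x}. \]
   Context: $p_i$ denotes the $i$-th prime. For $x\ge p_k$, $\eta_k(x)=\min\{p_{i-k}/p_i:\ p_i>x\}$. *)

(* Defs.v *)
From HB Require Import structures.
From mathcomp Require Import all_boot all_order all_algebra.
From mathcomp Require Import all_classical all_reals.
Set Implicit Arguments. Unset Strict Implicit. Unset Printing Implicit Defensive.
Import Order.TTheory GRing.Theory Num.Theory.

Lemma next_prime_ex (m : nat) : exists q, (m < q) && prime q.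
Proof. by case: (prime_above m) => q Hq Hp; exists q; rewrite Hq Hp. Qed.

Definition next_prime (m : nat) : nat := ex_minn (next_prime_ex m).

(* p_ i = the i-th prime, 1-indexed: p_ 1 = 2, p_ 2 = 3, p_ 3 = 5, ...
   (p_ 0 = 1 is a junk value, never used for i >= 1). *)
Definition p_ (i : nat) : nat := iter i next_prime 1.

Local Open Scope ring_scope.
Local Open Scope classical_set_scope.

(* eta_k(x) = min { p_{i-k} / p_i : p_i > x }, taken as the infimum
   (the minimum is attained, so inf = min). *)
Definition eta_k (R : realType) (k : nat) (x : R) : R :=
  inf [set ((p_ (i - k))%:R / (p_ i)%:R : R) | i in [set i : nat | x < (p_ i)%:R]].

(* Main.v *)
Require Import Defs.
From HB Require Import structures.
From mathcomp Require Import all_boot all_order all_algebra.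
From mathcomp Require Import all_classical all_reals.
From mathcomp Require Import ring lra zify.
Import Order.TTheory GRing.Theory Num.Theory.
Local Open Scope ring_scope.

Lemma next_prime_gt m : (m < next_prime m)%N.
Proof.
rewrite /next_prime; case: ex_minnP => q /andP[]. by [].
Qed.

Lemma p_S i : (p_ i < p_ i.+1)%N.
Proof. rewrite /p_ iterS; exact: next_prime_gt. Qed.

Lemma p_ge i : (i < p_ i)%N.
Proof. elim: i => [//|i IH]; exact: (leq_ltn_trans IH (p_S i)). Qed.

Lemma p_mono : {mono p_ : m n / (m <= n)%N}.
Proof. apply: leq_mono; apply: homo_ltn; [exact: ltn_trans | exact: p_S]. Qed.

Lemma p_sum (R : realType) (i0 : nat) (f : R -> R) :
  (forall s t : R, (p_ i0)%:R <= s -> s <= t -> f s <= f t) ->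
  (forall i : nat, (i0 <= i)%N -> (p_ i.+1)%:R <= (p_ i)%:R + f (p_ i.+1)%:R) ->
  forall m n, (i0 <= m)%N ->
  (p_ (m + n))%:R <= (p_ m)%:R + n%:R * f (p_ (m + n))%:R.
Proof.
move=> Hf Hs m n Hm; elim: n => [|n IH]; first by rewrite addn0 mul0r addr0.
rewrite addnS.
have H1 := Hs (m + n)%N (leq_trans Hm (leq_addr _ _)).
have H2 : f (p_ (m + n))%:R <= f (p_ (m + n).+1)%:R.
  apply: Hf; rewrite ler_nat ?p_mono //.
  exact: leq_trans Hm (leq_addr _ _).
have H3 : n%:R * f (p_ (m + n))%:R <= n%:R * f (p_ (m + n).+1)%:R.
  by apply: ler_wpM2l.
rewrite -natr1 mulrDl mul1r.
apply: (le_trans H1); lra.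
Qed.

Theorem mainTheorem12 (R : realType) (i0 : nat) (f : R -> R) (k : nat) (x : R) :
  (1 <= i0)%N ->
  (forall s t : R, (p_ i0)%:R <= s -> s <= t -> f s <= f t) ->
  (forall i : nat, (i0 <= i)%N -> (p_ i.+1)%:R <= (p_ i)%:R + f (p_ i.+1)%:R) ->
  (1 <= k)%N ->
  (p_ (i0 + k - 1))%:R <= x ->
  (forall s t : R, x <= s -> s <= t -> f t / t <= f s / s) ->
  1 - k%:R * (f x / x) <= @eta_k R k x.
Proof.
move=> Hi0 Hf Hs Hk Hx Hdec.
have x0 : 0 < x.
  apply: lt_le_trans Hx; rewrite ltr0n; exact: leq_ltn_trans (p_ge _).
apply: lb_le_inf.
  exists ((p_ (Num.truncn x).+1)%:R / (p_ ((Num.truncn x).+1 - k))%:R)^-1.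
  exists (Num.truncn x).+1; last by rewrite invf_div.
  rewrite /=; apply: lt_trans (truncnS_gt x) _; rewrite ltr_nat; exact: p_ge.
move=> _ [i /= Hi <-].
have Hik : (i0 + k <= i)%N.
  have : (p_ (i0 + k - 1) < p_ i)%N by rewrite -(ltr_nat R); exact: le_lt_trans Hx Hi.
  rewrite ltnNge p_mono -ltnNge.
  move=> ?; lia.
have Hm : (i0 <= i - k)%N by lia.
have := @p_sum R i0 f Hf Hs _ k Hm; rewrite subnK; last lia.
move=> Hp.
have pi0 : 0 < (p_ i)%:R :> R by apply: lt_trans Hi.
have Hd := Hdec x (p_ i)%:R (lexx x) (ltW Hi).
have Hk0 : 0 <= k%:R :> R by [].
have : k%:R * (f (p_ i)%:R / (p_ i)%:R) <= k%:R * (f x / x) by apply: ler_wpM2l.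
suff : 1 - k%:R * (f (p_ i)%:R / (p_ i)%:R) <= (p_ (i - k))%:R / (p_ i)%:R by lra.
set P := (p_ i)%:R : R.
have E : 1 - k%:R * (f P / P) = (P - k%:R * f P) / P.
  by field; rewrite gt_eqF.
rewrite E; apply: ler_wpM2r; first by rewrite invr_ge0 ltW.
rewrite /P; lra.
Qed.
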